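(* Let $\mathcal D_1=(L_1,\|\cdot\|_1)$ and $\mathcal D_2=(L_2,\|\cdot\|_2)$ be arithmetic divisors on $\overline{\operatorname{Spec}\mathbf{Z}}$ that are non-degenerate, i.e. whose semi-norms are not identically zero. For $\mathcal D=(L,\|\cdot\|)$ let $S(\mathcal D)=\{\|x\|\mid x\in L\}\subset[0,\infty)$. Then $\mathcal D_1$ and $\mathcal D_2$ are isomorphic if and only if $S(\mathcal D_1)=S(\mathcal D_2)$.
   Context: An arithmetic divisor on $\overline{\operatorname{Spec}\mathbf{Z}}$ is a pair $(L,\|\cdot\|)$ with $L$ torsion-free abelian of rank 1 and $\|\cdot\|$ a semi-norm on $L\otimes_\mathbf{Z}\mathbf{R}$ of the form $\lambda|\phi(\cdot)|$ with $\phi:L\otimes\mathbf{R}\to\mathbf{R}$ an isomorphism and $\lambda\ge0$. An isomorphism $(L_1,\|\cdot\|_1)\to(L_2,\|\cdot\|_2)$ is a group isomorphism $\psi:L_1\to L_2$ with $\|\psi(x)\|_2=\|x\|_1$ for all $x\in L_1$. *)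

(* Defs.v *)
From HB Require Import structures.
From mathcomp Require Import all_boot all_order all_algebra.
From mathcomp Require Import reals.
Set Implicit Arguments. Unset Strict Implicit. Unset Printing Implicit Defensive.
Import Order.TTheory GRing.Theory Num.Theory.
Local Open Scope ring_scope.

Definition torsion_free (L : zmodType) : Prop :=
  forall (x : L) (n : nat), x *+ n.+1 = 0 -> x = 0.

Definition rank_one (L : zmodType) : Prop :=
  (exists x : L, x != 0) /\
  forall x y : L, exists m n : int, (m != 0 \/ n != 0) /\ x *~ m = y *~ n.

(* An arithmetic divisor on \bar{Spec Z}: (L, ||.||) with L torsion-free of
   rank 1 and ||.|| = lambda |phi(.)| on L (x) R, phi : L (x) R -> R an
   isomorphism, lambda >= 0.  Since L (x) R is a 1-dimensional real vector
   space and L embeds in it, phi is recorded through its restriction to L,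
   i.e. an injective group homomorphism L -> R. *)
Record arith_divisor (R : realType) := ArithDivisor {
  ad_L : zmodType;
  ad_torsion_free : torsion_free ad_L;
  ad_rank_one : rank_one ad_L;
  ad_phi : {additive ad_L -> R};
  ad_phi_inj : injective ad_phi;
  ad_lambda : R;
  ad_lambda_ge0 : 0 <= ad_lambda }.

Definition ad_norm (R : realType) (D : arith_divisor R) (x : ad_L D) : R :=
  ad_lambda D * `|ad_phi D x|.
Arguments ad_norm {R} D x.

(* Non-degenerate: the semi-norm lambda |phi(.)| on L (x) R is not
   identically zero, i.e. lambda <> 0. *)
Definition ad_nondegenerate (R : realType) (D : arith_divisor R) : Prop :=
  ad_lambda D != 0.

Definition S_values (R : realType) (D : arith_divisor R) : R -> Prop :=
  fun r => exists x : ad_L D, ad_norm D x = r.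

Definition ad_isomorphic (R : realType) (D1 D2 : arith_divisor R) : Prop :=
  exists psi : {additive ad_L D1 -> ad_L D2},
    bijective psi /\ forall x : ad_L D1, ad_norm D2 (psi x) = ad_norm D1 x.

(* Main.v *)
Require Import Defs.
From mathcomp Require Import all_boot all_order all_algebra.
From mathcomp Require Import reals.
From HB Require Import structures.
From Stdlib Require Import ClassicalEpsilon FunctionalExtensionality PropExtensionality.
Set Implicit Arguments. Unset Strict Implicit. Unset Printing Implicit Defensive.
Import Order.TTheory GRing.Theory Num.Theory.
Local Open Scope ring_scope.

Definition adf (R : realType) (D : arith_divisor R) (x : ad_L D) : R :=
  ad_lambda D * ad_phi D x.

Lemma adf_inj (R : realType) (D : arith_divisor R) :
  ad_nondegenerate D -> injective (@adf R D).
Proof.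
move=> H x y; rewrite /adf => /(mulfI H); exact: ad_phi_inj.
Qed.

Lemma adf_norm (R : realType) (D : arith_divisor R) x :
  ad_norm D x = `|adf x|.
Proof. by rewrite /ad_norm /adf normrM ger0_norm // ad_lambda_ge0. Qed.

Lemma adfD (R : realType) (D : arith_divisor R) (x y : ad_L D) :
  adf (x + y) = adf x + adf y.
Proof. by rewrite /adf raddfD mulrDr. Qed.

Lemma adfN (R : realType) (D : arith_divisor R) (x : ad_L D) :
  adf (- x) = - adf x.
Proof. by rewrite /adf raddfN mulrN. Qed.

Lemma exy (R : realType) (D1 D2 : arith_divisor R) :
  (forall r, S_values D1 r -> S_values D2 r) ->
  forall x : ad_L D1, exists y : ad_L D2, adf y = adf x.
Proof.
move=> HS x.
have [y Hy] : S_values D2 (ad_norm D1 x) by apply: HS; exists x.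
move: Hy; rewrite !adf_norm => /eqP; rewrite eqr_norm2 => /orP [/eqP E|/eqP E].
  by exists y.
by exists (- y); rewrite adfN E opprK.
Qed.

Definition psi_of (R : realType) (D1 D2 : arith_divisor R)
  (HS : forall r, S_values D1 r -> S_values D2 r) (x : ad_L D1) : ad_L D2 :=
  proj1_sig (constructive_indefinite_description _ (exy HS x)).

Lemma psi_ofP (R : realType) (D1 D2 : arith_divisor R)
  (HS : forall r, S_values D1 r -> S_values D2 r) x :
  adf (psi_of HS x) = adf x.
Proof. exact: (proj2_sig (constructive_indefinite_description _ (exy HS x))). Qed.

Theorem theorem3p11 (R : realType) (D1 D2 : arith_divisor R) :
  ad_nondegenerate D1 -> ad_nondegenerate D2 ->
  (ad_isomorphic D1 D2 <-> S_values D1 = S_values D2).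
Proof.
move=> H1 H2; split.
  move=> [psi [[phi psiK phiK] Hn]].
  apply: functional_extensionality => r; apply: propositional_extensionality.
  split.
    by move=> [x <-]; exists (psi x).
  by move=> [y <-]; exists (phi y); rewrite -Hn phiK.
move=> HS.
have HS12 : forall r, S_values D1 r -> S_values D2 r by rewrite HS.
have HS21 : forall r, S_values D2 r -> S_values D1 r by rewrite HS.
pose f := psi_of HS12.
have fB : {morph f : x y / x - y}.
  move=> x y; apply: (adf_inj H2).
  by rewrite adfD adfN !psi_ofP adfD adfN.
pose fA : {additive ad_L D1 -> ad_L D2} :=
  HB.pack f (GRing.isZmodMorphism.Build _ _ f fB).
exists fA; split.
  exists (psi_of HS21) => x; apply: (adf_inj _) => //; rewrite /= !psi_ofP //.
by move=> x; rewrite !adf_norm /= psi_ofP.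
Qed.
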